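(* Let $\mathcal{M}=\langle S,\to,L\rangle$ be a labeled transition system, let $B\subseteq S\times S$ be a skipping simulation on $\mathcal{M}$, and let $s,w\in S$. Then every path (branch from the root) of the tree $\mathit{ranktCt}(\mathcal{M},s,w)$ is finite.
   Context: A labeled transition system is $\mathcal{M}=\langle S,\to,L\rangle$ where $S$ is a non-empty set of states, $\to\subseteq S\times S$ is left-total, and $L$ is a function with domain $S$. A fullpath is an infinite sequence $\sigma$ with $\sigma(i)\to\sigma(i+1)$ for all $i$; it starts at $\sigma(0)$. $w\to^{+}v$ means there is a finite path $w=v_0\to\cdots\to v_k=v$ with $k\ge1$. Let $\mathit{INC}$ be the set of strictly increasing infinite sequences of naturals starting at $0$. For a fullpath $\sigma$ and $\pi\in\mathit{INC}$ the $i$-th segment of $\sigma$ is $\sigma(\pi(i)),\dots,\sigma(\pi(i+1)-1)$. $\mathit{match}(B,\sigma,\delta)$ holds iff there exist $\pi,\xi\in\mathit{INC}$ such that for every $i$ and every state $x$ in the $i$-th segment of $\sigma$ w.r.t. $\pi$, $xB\delta(\xi(i))$. $B$ is a skipping simulation (SKS) iff for all $s,w$ with $sBw$: $L(s)=L(w)$, and for every fullpath $\sigma$ starting at $s$ there is a fullpath $\delta$ starting at $w$ with $\mathit{match}(B,\sigma,\delta)$. The computation tree $\mathit{ctree}(\mathcal{M},s)$ has as nodes finite sequences over $S$; it is the smallest tree such that $\langle s\rangle$ is the root, and if $\langle s,\dots,x\rangle$ is a node and $x\to y$ then $\langle s,\dots,x,y\rangle$ is a node whose parent is $\langle s,\dots,x\rangle$.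 For the SKS $B$: if not $sBw$, $\mathit{ranktCt}(\mathcal{M},s,w)$ is the empty tree; otherwise it is the largest subtree of $\mathit{ctree}(\mathcal{M},s)$ (containing the root) such that every non-root node $\langle s,\dots,x\rangle$ satisfies $xBw$ and, for all $v$ with $w\to^{+}v$, not $xBv$. *)

(* Defs.v *)
From Stdlib Require Import List Arith.
Import ListNotations.
Set Implicit Arguments.

Section LTS.
Variables (St : Type) (R : St -> St -> Prop) (Lbl : Type) (L : St -> Lbl).

Definition fullpath (sigma : nat -> St) : Prop :=
  forall i, R (sigma i) (sigma (S i)).

Definition INC (pi : nat -> nat) : Prop :=
  pi 0 = 0 /\ forall i, pi i < pi (S i).

Definition match_ (B : St -> St -> Prop) (sigma delta : nat -> St) : Prop :=
  exists pi xi, INC pi /\ INC xi /\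
    forall i j, pi i <= j < pi (S i) -> B (sigma j) (delta (xi i)).

Definition SKS (B : St -> St -> Prop) : Prop :=
  forall s w, B s w ->
    L s = L w /\
    forall sigma, fullpath sigma -> sigma 0 = s ->
      exists delta, fullpath delta /\ delta 0 = w /\ match_ B sigma delta.

Definition tplus (w v : St) : Prop :=
  exists (k : nat) (f : nat -> St), 1 <= k /\ f 0 = w /\ f k = v /\
    forall i, i < k -> R (f i) (f (S i)).

Inductive ctree (s : St) : list St -> Prop :=
| ctree_root : ctree s [s]
| ctree_step : forall n x y, ctree s (n ++ [x]) -> R x y ->
    ctree s (n ++ [x] ++ [y]).

Definition is_subtree (s : St) (T : list St -> Prop) : Prop :=
  (forall n, T n -> ctree s n) /\ T [s] /\
  (forall n y, n <> [] -> T (n ++ [y]) -> T n).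

Definition rank_cond (B : St -> St -> Prop) (w : St) (T : list St -> Prop) :=
  forall n x, n <> [] -> T (n ++ [x]) ->
    B x w /\ forall v, tplus w v -> ~ B x v.

(* ranktCt(M,s,w): empty if not sBw; otherwise the largest subtree of
   ctree(M,s) containing the root satisfying rank_cond, i.e. the union
   of all such subtrees. *)
Definition ranktCt (B : St -> St -> Prop) (s w : St) (n : list St) : Prop :=
  B s w /\ exists T, is_subtree s T /\ rank_cond B w T /\ T n.

Definition infinite_branch (T : list St -> Prop) (s : St) : Prop :=
  exists f : nat -> list St, f 0 = [s] /\
    forall k, T (f k) /\ exists y, f (S k) = f k ++ [y].

End LTS.

(* Main.v *)
Require Import Defs.
From Stdlib Require Import List Arith Lia.
Import ListNotations.

Lemma ctree_inv (St : Type) (R : St -> St -> Prop) (s : St) l :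
  ctree R s l -> forall n x y, l = n ++ [x] ++ [y] -> R x y.
Proof.
  induction 1 as [|n0 x0 y0 H IH Hr]; intros n x y E.
  - destruct n as [|a [|b n]]; simpl in E; try discriminate.
    all: try (destruct n; discriminate).
  - rewrite !app_assoc in E. apply app_inj_tail in E as [E1 E2]; subst.
    apply app_inj_tail in E1 as [E1 E3]; subst; auto.
Qed.

Theorem lemma1 (St : Type) (R : St -> St -> Prop) (Lbl : Type) (L : St -> Lbl)
  (Hne : inhabited St) (Htot : forall x, exists y, R x y)
  (B : St -> St -> Prop) (HB : SKS R L B) (s w : St) :
  ~ infinite_branch (ranktCt R B s w) s.
Proof.
  intros [f [F0 Hf]].
  set (sg := fun k => last (f k) s).
  assert (Hlast : forall k, exists n, f k = n ++ [sg k]).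
  { intro k; unfold sg; destruct k as [|k].
    - exists []; rewrite F0; reflexivity.
    - destruct (Hf k) as [_ [y Hy]]. rewrite Hy, last_last. exists (f k); reflexivity. }
  assert (Hstep : forall k, R (sg k) (sg (S k)) /\ B (sg (S k)) w /\
                            forall v, tplus R w v -> ~ B (sg (S k)) v).
  { intro k. destruct (Hf (S k)) as [[Bsw [T [[Tc [Tr Tp]] [Rc Tn]]]] _].
    destruct (Hf k) as [_ [y Hy]].
    assert (Ey : sg (S k) = y) by (unfold sg; rewrite Hy, last_last; reflexivity).
    rewrite Ey. destruct (Hlast k) as [n Hn].
    split.
    - apply (ctree_inv _ _ _ _ (Tc _ Tn) n). rewrite Hy, Hn. rewrite <- app_assoc. reflexivity.
    - rewrite Hy in Tn. apply (Rc (f k) y); auto.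
      rewrite Hn. destruct n; discriminate. }
  destruct (Hf 0) as [[Bsw _] _].
  destruct (HB s w Bsw) as [_ Hsim].
  assert (Hfp : fullpath R sg) by (intro i; apply Hstep).
  assert (S0 : sg 0 = s) by (unfold sg; rewrite F0; reflexivity).
  destruct (Hsim sg Hfp S0) as [d [Hd [D0 [pi [xi [[P0 Pi] [[X0 Xi] Hm]]]]]]].
  assert (Hb := Hm 1 (pi 1) ltac:(split; [lia | apply Pi])).
  assert (P1 : pi 1 >= 1) by (specialize (Pi 0); lia).
  destruct (pi 1) as [|j] eqn:Ej; [lia|].
  apply (proj2 (proj2 (Hstep j)) (d (xi 1))); auto.
  exists (xi 1), d. specialize (Xi 0). repeat split; try lia; auto.
Qed.
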